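(* The proximity pre-order $\preceq^{\mathrm{edit\text{-}dist}}$ is well-founded and has the finite-basis property.
   Context: CQs are $q(x_1,\dots,x_k)\text{ :- }\alpha_1,\dots,\alpha_n$ (relational atoms, no constants, pairwise distinct answer variables each occurring in an atom) over a fixed finite schema. Canonical example $e_q=(I_q,(x_1,\dots,x_k))$ with facts the atoms of $q$; $\mathrm{core}(e)$ is the core of a data example (the minimal homomorphically equivalent sub-example, unique up to isomorphism). $\mathrm{edit\text{-}dist}(q_1,q_2)=\min_\rho|\mathrm{core}(e_{q_1})\oplus\mathrm{core}(e_{\rho(q_2)})|$ over bijective renamings $\rho$ of the variables of $q_2(y_1,\dots,y_k)$ with $\rho(y_i)=x_i$, $\oplus$ symmetric difference of facts. $q'\preceq^{\mathrm{edit\text{-}dist}}_q q''$ iff $\mathrm{edit\text{-}dist}(q,q')\le\mathrm{edit\text{-}dist}(q,q'')$; $\prec_q$ is the strict part. A proximity pre-order $\preceq$ is well-founded if for each CQ $q$, every non-empty set of CQs has a $\preceq_q$-minimal element; it has the finite-basis property if for each CQ $q$, every set of CQs has only finitely many $\preceq_q$-minimal elements up to equivalence (equivalence: same answers on every instance). *)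

(* Defs.v *)
From HB Require Import structures.
From mathcomp Require Import all_boot finmap.
From Stdlib Require Import ClassicalEpsilon.

Set Implicit Arguments.
Unset Strict Implicit.
Unset Printing Implicit Defensive.

Local Open Scope fset_scope.

Record schema := Schema { rsym : finType ; arity : rsym -> nat }.

Section CQs.
Variable sig : schema.

Definition fact := (rsym sig * seq nat)%type.
Definition instance := {fset fact}.

Definition wf_fact (a : fact) : Prop := size a.2 = arity a.1.

(* Conjunctive queries of arity k: pairwise distinct answer variables, each
   occurring in some atom; atoms are well-formed; no constants. *)
Record CQ (k : nat) := MkCQ {
  cq_head : k.-tuple nat ;
  cq_body : instance ;
  cq_head_uniq : uniq cq_head ;
  cq_head_occ : forall x, x \in cq_head -> exists2 a, a \in cq_body & x \in a.2 ;
  cq_body_wf : forall a, a \in cq_body -> wf_fact a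
}.

Definition cq_vars k (q : CQ k) (x : nat) : Prop :=
  exists2 a, a \in cq_body q & x \in a.2.

Definition data_example (k : nat) := (instance * k.-tuple nat)%type.

Definition canonical_example k (q : CQ k) : data_example k := (cq_body q, cq_head q).

Definition is_hom k (h : nat -> nat) (e e' : data_example k) : Prop :=
  (forall a, a \in e.1 -> (a.1, map h a.2) \in e'.1) /\ map h e.2 = val e'.2.

Definition hom_equiv k (e e' : data_example k) : Prop :=
  (exists h, is_hom h e e') /\ (exists h, is_hom h e' e).

Definition sub_example k (e' e : data_example k) : Prop :=
  e'.1 `<=` e.1 /\ e'.2 = e.2.

Definition is_core k (c e : data_example k) : Prop :=
  sub_example c e /\ hom_equiv c e /\
  forall c', sub_example c' c -> hom_equiv c' e -> c'.1 = c.1.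

Definition symdiff_card (A B : instance) : nat := #|` (A `\` B) `|` (B `\` A)|.

Definition renaming k (q1 q2 : CQ k) (rho : nat -> nat) : Prop :=
  (forall x y, cq_vars q2 x -> cq_vars q2 y -> rho x = rho y -> x = y) /\
  map rho (cq_head q2) = val (cq_head q1).

Definition renamed_example k (q1 q2 : CQ k) (rho : nat -> nat) : data_example k :=
  ([fset (a.1, map rho a.2) | a in cq_body q2], cq_head q1).

(* d is an achievable value |core(e_q1) (+) core(e_rho(q2))| ; cores are only
   unique up to isomorphism, so we range over every choice of core
   (this does not change the minimum) *)
Definition edit_value k (q1 q2 : CQ k) (d : nat) : Prop :=
  exists rho c1 c2,
    renaming q1 q2 rho /\
    is_core c1 (canonical_example q1) /\
    is_core c2 (renamed_example q1 q2 rho) /\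
    d = symdiff_card c1.1 c2.1.

Definition is_edit_dist k (q1 q2 : CQ k) (d : nat) : Prop :=
  edit_value q1 q2 d /\ forall d', edit_value q1 q2 d' -> d <= d'.

Definition edit_dist k (q1 q2 : CQ k) : nat :=
  epsilon (inhabits 0) (is_edit_dist q1 q2).

Definition cq_answer k (q : CQ k) (I : instance) (t : seq nat) : Prop :=
  exists h : nat -> nat, is_hom h (canonical_example q) (I, [tuple of map h (cq_head q)]) /\
    t = map h (cq_head q).

Definition cq_equiv k (q q' : CQ k) : Prop :=
  forall (I : instance) (t : seq nat), cq_answer q I t <-> cq_answer q' I t.

Definition proximity := forall k, CQ k -> CQ k -> CQ k -> Prop.

Definition edit_dist_order : proximity :=
  fun k q q' q'' => edit_dist q q' <= edit_dist q q''.

Definition strictly_below (P : proximity) k (q q' q'' : CQ k) : Prop :=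
  P k q q' q'' /\ ~ P k q q'' q'.

Definition is_minimal (P : proximity) k (q : CQ k) (S : CQ k -> Prop) (m : CQ k) : Prop :=
  S m /\ forall q', S q' -> ~ strictly_below P q q' m.

Definition well_founded_prox (P : proximity) : Prop :=
  forall k (q : CQ k) (S : CQ k -> Prop), (exists q', S q') ->
    exists m, is_minimal P q S m.

Definition finite_basis (P : proximity) : Prop :=
  forall k (q : CQ k) (S : CQ k -> Prop),
    exists L : seq (CQ k), forall m, is_minimal P q S m ->
      exists2 m', List.In m' L & cq_equiv m m'.

End CQs.

(* Main.v *)
Require Import Defs.
From HB Require Import structures.
From mathcomp Require Import all_boot finmap.
From Stdlib Require Import Classical ClassicalEpsilon.

Set Implicit Arguments.
Unset Strict Implicit.
Unset Printing Implicit Defensive.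
Local Open Scope fset_scope.

Section Aux.
Variable sig : schema.

Lemma hom_comp k (e1 e2 e3 : data_example sig k) h g :
  is_hom h e1 e2 -> is_hom g e2 e3 -> is_hom (g \o h) e1 e3.
Proof.
move=> [H1 T1] [H2 T2]; split.
  by move=> a /H1 /H2 /=; rewrite map_comp.
by rewrite map_comp T1.
Qed.

Lemma hom_id k (e : data_example sig k) : is_hom id e e.
Proof. by split; [move=> [r s] /=; rewrite map_id | rewrite map_id]. Qed.

Lemma hom_equiv_sym k (e1 e2 : data_example sig k) : hom_equiv e1 e2 -> hom_equiv e2 e1.
Proof. by case. Qed.

Lemma hom_equiv_trans k (e1 e2 e3 : data_example sig k) :
  hom_equiv e1 e2 -> hom_equiv e2 e3 -> hom_equiv e1 e3.
Proof.
move=> [[h1 H1] [g1 G1]] [[h2 H2] [g2 G2]]; split.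
  by exists (h2 \o h1); apply: hom_comp H1 H2.
by exists (g1 \o g2); apply: hom_comp G2 G1.
Qed.

Lemma hom_equiv_cq k (m m' : CQ sig k) :
  hom_equiv (canonical_example m) (canonical_example m') -> cq_equiv m m'.
Proof.
move=> [[f [F1 F2]] [g [G1 G2]]] I t; split.
  move=> [h [[H1 H2] ->]]; exists (h \o g); split; last first.
    by rewrite map_comp G2.
  split => /=; last by [].
  move=> a /G1 /H1 /=; by rewrite map_comp.
move=> [h [[H1 H2] ->]]; exists (h \o f); split; last first.
  by rewrite map_comp F2.
split => /=; last by [].
move=> a /F1 /H1 /=; by rewrite map_comp.
Qed.

Lemma nat_min (P : nat -> Prop) : (exists n, P n) -> exists n, P n /\ forall m, P m -> n <= m.
Proof.
move=> [n Pn]; elim/ltn_ind: n Pn => n IH Pn.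
case: (classic (exists m, m < n /\ P m)) => [[m [lt Pm]]|N].
  exact: IH lt Pm.
exists n; split=> // m Pm; rewrite leqNgt; apply/negP => lt; apply: N; by exists m.
Qed.

Lemma core_exists k (e : data_example sig k) : exists c, is_core c e.
Proof.
have ex : exists n, exists c, sub_example c e /\ hom_equiv c e /\ #|` c.1| = n.
  exists #|` e.1|, e; split; first by split; [apply: fsubset_refl|].
  by split=> //; split; exists id; apply: hom_id.
have [n [[c [Sc [Ec Nc]]] Min]] := nat_min ex.
exists c; split=> //; split=> // c' [S1 S2] E'.
have : n <= #|` c'.1|.
  apply: Min; exists c'; case: Sc => Sc1 Sc2.
  by split; [split; [apply: (fsubset_trans S1 Sc1) | rewrite S2] | split].
move=> le; apply/eqP; rewrite eqEfcard S1 /=; by rewrite Nc.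
Qed.

Lemma sumn_mem (s : seq nat) x : x \in s -> x <= sumn s.
Proof.
elim: s => //= y s IH; rewrite in_cons => /orP [/eqP ->|/IH]; first exact: leq_addr.
move=> h; apply: leq_trans h _; exact: leq_addl.
Qed.

Lemma renaming_exists k (q m : CQ sig k) : exists rho, renaming q m rho.
Proof.
set hq := val (cq_head q); set hm := val (cq_head m).
set B := (sumn hq).+1.
have Shq : size hq = k by rewrite /hq size_tuple.
have Shm : size hm = k by rewrite /hm size_tuple.
have Uq : uniq hq := cq_head_uniq q.
have Um : uniq hm := cq_head_uniq m.
pose rho x := if x \in hm then nth 0 hq (index x hm) else (B + x)%N.
have rlt x : x \in hm -> rho x < B.
  move=> xm; rewrite /rho xm ltnS; apply: sumn_mem; apply: mem_nth.
  by rewrite Shq -Shm index_mem.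
exists rho; split.
  move=> x y _ _; case xm: (x \in hm); case ym: (y \in hm).
  - rewrite /rho xm ym => /eqP; rewrite nth_uniq // ?Shq -?Shm ?index_mem //.
    by move/eqP => e; rewrite -(nth_index 0 xm) -(nth_index 0 ym) e.
  - move=> e; have := rlt x xm; rewrite e /rho ym => /(leq_trans (leq_addr y B)).
    by rewrite ltnn.
  - move=> e; have := rlt y ym; rewrite -e /rho xm => /(leq_trans (leq_addr x B)).
    by rewrite ltnn.
  - by rewrite /rho xm ym => /eqP; rewrite eqn_add2l => /eqP.
apply: (@eq_from_nth _ 0); first by rewrite size_map Shq Shm.
move=> i; rewrite size_map => lt; rewrite (nth_map 0) // /rho mem_nth //.
by rewrite index_uniq.
Qed.

Lemma edit_value_exists k (q m : CQ sig k) : exists d, edit_value q m d.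
Proof.
have [rho R] := renaming_exists q m.
have [c1 C1] := core_exists (canonical_example q).
have [c2 C2] := core_exists (renamed_example q m rho).
by exists (symdiff_card c1.1 c2.1), rho, c1, c2.
Qed.

Lemma edit_dist_spec k (q m : CQ sig k) : edit_value q m (edit_dist q m).
Proof.
have [d [Ed Md]] : exists d, is_edit_dist q m d.
  have [d [Ed Md]] := nat_min (edit_value_exists q m).
  by exists d; split.
rewrite /edit_dist; have := epsilon_spec (inhabits 0) (is_edit_dist q m).
by case => //; exists d.
Qed.

End Aux.
Fixpoint tuples_of (n : nat) (l : seq nat) : seq (seq nat) :=
  match n with
  | 0 => [:: [::]]
  | n'.+1 => flatten [seq [seq x :: s | s <- tuples_of n' l] | x <- l]
  end.

Lemma mem_tuples_of n l s : size s = n -> all (mem l) s -> s \in tuples_of n l.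
Proof.
elim: n s => [|n IH] [|x s] //= [Hs] /andP [xl al].
apply/flatten_mapP; exists x => //; apply: map_f; exact: IH.
Qed.

Lemma sumn_bound (T : Type) (f : T -> nat) (s : seq T) A :
  (forall x, List.In x s -> f x <= A) -> sumn (map f s) <= size s * A.
Proof.
elim: s => //= x s IH H; rewrite mulSn leq_add //.
  by apply: H; left.
by apply: IH => y Hy; apply: H; right.
Qed.

Lemma mem_In (T : eqType) (x : T) s : x \in s -> List.In x s.
Proof. elim: s => //= y s IH; rewrite in_cons => /orP [/eqP ->|/IH]; tauto. Qed.

Lemma In_mem (T : eqType) (x : T) s : List.In x s -> x \in s.
Proof. elim: s => //= y s IH [->|/IH]; rewrite in_cons ?eqxx // => ->; by rewrite orbT. Qed.

Section Key.
Variable sig : schema.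
Variables (k : nat) (q : CQ sig k) (d : nat).

Definition hq : seq nat := val (cq_head q).
Definition BB := (sumn hq).+1.
Definition AA := \max_(r : rsym sig) arity r.
Definition NN := (BB + (#|` cq_body q| + d) * AA)%N.
Definition Useq : seq (fact sig) :=
  flatten [seq [seq (r, s) | s <- tuples_of (arity r) (iota 0 NN)] | r <- enum (rsym sig)].
Definition Keys : seq (instance sig) := enum_fset (fpowerset (seq_fset tt Useq)).

Lemma hqB x : x \in hq -> x < BB.
Proof. by move=> h; rewrite ltnS; apply: sumn_mem. Qed.

Lemma card_sd (A B : instance sig) : #|` B| <= #|` A| + symdiff_card A B.
Proof.
have s1 : B `<=` A `|` (B `\` A).
  apply/fsubsetP => x xB; rewrite in_fsetU in_fsetD xB andbT; by case: (x \in A).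
apply: leq_trans (fsubset_leq_card s1) _.
have := cardfsUI A (B `\` A) => e.
apply: (@leq_trans (#|` A| + #|` B `\` A|)).
  by rewrite -e leq_addr.
rewrite leq_add2l; apply: fsubset_leq_card; exact: fsubsetUr.
Qed.

Lemma key_lemma (m : CQ sig k) : edit_value q m d ->
  exists2 c, c \in Keys & hom_equiv (canonical_example m) (c, cq_head q).
Proof.
move=> [rho [c1 [c2 [[Rinj Rhead] [C1 [C2 Ed]]]]]].
set R := renamed_example q m rho.
case: C2 => [[Sub2 T2] [[[h2 Hh2] [g2 Hg2]] _]].
case: C1 => [[Sub1 _] _].
set vs := flatten [seq a.2 | a <- enum_fset c2.1].
set W := [seq x <- undup vs | x \notin hq].
pose sg x := if x \in W then (BB + index x W)%N else x.
pose tau y := if (BB <= y) && (y - BB < size W) then nth 0 W (y - BB) else y.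
have vsP a x : a \in c2.1 -> x \in a.2 -> x \in vs.
  by move=> aI xa; apply/flatten_mapP; exists a.
have notW x : x \in vs -> x \notin W -> x \in hq.
  by move=> xv; rewrite mem_filter mem_undup xv andbT negbK.
have ts x : x \in vs -> tau (sg x) = x.
  move=> xv; rewrite /sg; case: ifP => xW.
    rewrite /tau leq_addr /= addKn index_mem xW /=; exact: nth_index.
  have xh := notW x xv (negbT xW).
  by rewrite /tau leqNgt hqB.
have sgh x : x \in hq -> sg x = x.
  by move=> xh; rewrite /sg mem_filter xh.
have tauh x : x \in hq -> tau x = x.
  by move=> xh; rewrite /tau leqNgt hqB.
pose K := [fset (a.1, map sg a.2) | a in c2.1].
pose rho' y := epsilon (inhabits 0) (fun x => cq_vars m x /\ rho x = y).
have rr x : cq_vars m x -> rho' (rho x) = x.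
  move=> vx; have [] := epsilon_spec (inhabits 0) (fun z => cq_vars m z /\ rho z = rho x).
    by exists x.
  move=> vz e; exact: Rinj.
have R1P b : b \in R.1 -> exists2 a, a \in cq_body m & b = (a.1, map rho a.2).
  by move/imfsetP.
exists K.
  rewrite /Keys fpowersetE; apply/fsubsetP => b /imfsetP [a aI ->].
  have [a' a'I ea] := R1P a (fsubsetP Sub2 a aI).
  have wfa : size a.2 = arity a.1.
    by rewrite ea /= size_map; apply: (cq_body_wf a'I).
  rewrite seq_fsetE; apply/flatten_mapP; exists a.1; first exact: mem_enum.
  apply: map_f; apply: mem_tuples_of; first by rewrite size_map.
  apply/allP => y /mapP [x xa ->]; rewrite -[mem _ _]/(sg x \in iota 0 NN) mem_iota add0n /=.
  have xv := vsP a x aI xa.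
  rewrite /sg; case: ifP => xW; last first.
    apply: leq_trans (hqB (notW x xv (negbT xW))) _; exact: leq_addr.
  rewrite /NN ltn_add2l; apply: (@leq_trans (size W)); first by rewrite index_mem.
  apply: (@leq_trans (size vs)).
    rewrite size_filter; apply: leq_trans (count_size _ _) _; exact: size_undup.
  rewrite /vs size_flatten /shape -map_comp.
  apply: leq_trans (sumn_bound (A := AA) _) _.
    move=> a0 /In_mem a0I /=.
    have [a1 a1I ea1] := R1P a0 (fsubsetP Sub2 a0 a0I).
    have -> : size a0.2 = arity a0.1 by rewrite ea1 /= size_map; apply: (cq_body_wf a1I).
    exact: leq_bigmax.
  rewrite leq_mul2r; apply/orP; right.
  apply: leq_trans (card_sd c1.1 c2.1) _; rewrite -Ed leq_add2r.
  exact: fsubset_leq_card.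
have F1 : is_hom rho (canonical_example m) R.
  split; last by rewrite /= Rhead.
  by move=> a aI /=; apply/imfsetP; exists a.
have F3 : is_hom sg c2 (K, cq_head q).
  split; last by rewrite T2 /= map_id_in.
  by move=> a aI /=; apply/imfsetP; exists a.
have B1 : is_hom tau (K, cq_head q) c2.
  split.
    move=> b /imfsetP [a aI ->] /=; rewrite -map_comp map_id_in; first by case: a aI.
    by move=> x xa /=; apply: ts; apply: vsP xa.
  by rewrite /= map_id_in // T2.
have B2 : is_hom id c2 R.
  split.
    by move=> a aI; rewrite map_id; case: a aI => ? ? /= /(fsubsetP Sub2).
  by rewrite map_id T2.
have B3 : is_hom rho' R (canonical_example m).
  split.
    move=> b /imfsetP [a aI ->] /=; rewrite -map_comp map_id_in; first by case: a aI.
    move=> x xa /=; apply: rr; by exists a.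
  rewrite /= -Rhead -map_comp map_id_in // => x xh /=; apply: rr.
  exact: cq_head_occ.
split.
  exists (sg \o (g2 \o rho)); apply: hom_comp F3; exact: hom_comp F1 Hg2.
exists (rho' \o (id \o tau)); apply: hom_comp B3; exact: hom_comp B1 B2.
Qed.

End Key.
Theorem proposition34 (sig : schema) :
  well_founded_prox (@edit_dist_order sig) /\ finite_basis (@edit_dist_order sig).
Proof.
split.
  move=> k q S [q0 S0].
  have [n [[m [Sm Em]] Min]] :=
    nat_min (ex_intro (fun n => exists q', S q' /\ edit_dist q q' = n) _ (ex_intro _ q0 (conj S0 erefl))).
  exists m; split => // q' Sq' [_ nle]; apply: nle; rewrite /edit_dist_order Em.
  by apply: Min; exists q'.
move=> k q S.
case: (classic (exists m0, is_minimal (@edit_dist_order sig) q S m0)) => [[m0 M0]|N]; last first.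
  by exists [::] => m Mm; exfalso; apply: N; exists m.
pose d := edit_dist q m0.
pose f c := epsilon (inhabits q) (fun m' => is_minimal (@edit_dist_order sig) q S m' /\
   hom_equiv (canonical_example m') (c, cq_head q)).
exists (map f (Keys q d)) => m Mm.
have Ed : edit_dist q m = d.
  case: M0 => S0 M0; case: Mm => Sm Mm.
  have h1 := M0 m Sm; have h2 := Mm m0 S0.
  rewrite /strictly_below /edit_dist_order in h1 h2.
  apply/eqP; rewrite eqn_leq; apply/andP; split.
    rewrite leqNgt; apply/negP => lt; apply: h2; split; first exact: ltnW.
    by rewrite leqNgt lt.
  rewrite leqNgt; apply/negP => lt; apply: h1; split; first exact: ltnW.
  by rewrite leqNgt lt.
have := edit_dist_spec q m; rewrite Ed => /key_lemma [c cK E].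
exists (f c); first by apply: List.in_map; apply: mem_In.
have [] := epsilon_spec (inhabits q) (fun m' => is_minimal (@edit_dist_order sig) q S m' /\
   hom_equiv (canonical_example m') (c, cq_head q)).
  by exists m.
move=> _ E'; apply: hom_equiv_cq; apply: hom_equiv_trans E (hom_equiv_sym E').
Qed.
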